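(* Let $A$ be a unital JB$^*$-algebra, $T:A\to A$ a bounded linear map which is triple derivable at orthogonal pairs, and $e$ a tripotent in $A$. Let $T_e=P_2(e)T|_{A_2(e)}:A_2(e)\to A_2(e)$. Suppose $\delta:A\to A$ is a triple derivation and $\xi$ is a self-adjoint element of the centre of $A$ with $T(a)=\delta(a)+\xi\circ a$ for all $a\in A$, and suppose $\delta_e:A_2(e)\to A_2(e)$ is a triple derivation and $\xi_e$ is a self-adjoint element of the centre of the JB$^*$-algebra $A_2(e)$ (self-adjoint meaning $\xi_e^{*_e}=\xi_e$) with $T_e(a)=\delta_e(a)+\xi_e\circ_e a$ for all $a\in A_2(e)$. Then $\xi\circ e=\xi_e$.
   Context: A JB$^*$-algebra is a complex Jordan Banach algebra with algebra involution $^*$ such that $\|\{a,a,a\}\|=\|a\|^3$; it is a JB$^*$-triple with triple product $\{x,y,z\}=(x\circ y^* )\circ z+(z\circ y^* )\circ x-(x\circ z)\circ y^*$. Elements $a,b$ are orthogonal if $\{a,b,x\}=0$ for all $x$. A linear map $T$ is triple derivable at orthogonal pairs if $\{T(a),b,c\}+\{a,T(b),c\}+\{a,b,T(c)\}=0$ for all $a,b,c$ with $a\perp b$. A triple derivation satisfies $\delta\{a,b,c\}=\{\delta a,b,c\}+\{a,\delta b,c\}+\{a,b,\delta c\}$. A tripotent is $e$ with $\{e,e,e\}=e$; $A_2(e)=\{x:\{e,e,x\}=x\}$ with Peirce projection $P_2(e)$; $A_2(e)$ is a unital JB$^*$-algebra with product $x\circ_e y=\{x,e,y\}$ and involution $x^{*_e}=\{e,x,e\}$.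 The centre of a JB$^*$-algebra $B$ is the set of $z$ with $(z\circ c)\circ y=z\circ(c\circ y)$ for all $c,y\in B$. *)

(* Defs.v *)
From mathcomp Require Import all_boot all_algebra.
From mathcomp Require Import all_classical all_reals all_analysis.
From mathcomp.real_closed Require Export complex.
Export GRing.Theory Num.Theory.
Export numFieldNormedType.Exports.
Set Implicit Arguments. Unset Strict Implicit. Unset Printing Implicit Defensive.
Local Open Scope ring_scope.
Local Open Scope complex_scope.

Section JB.
Variable R : realType.
Variable V : completeNormedModType R[i].
Variable jm : V -> V -> V.   (* Jordan product  x o y *)
Variable st : V -> V.        (* involution  x^* *)

Definition tp (x y z : V) : V :=
  jm (jm x (st y)) z + jm (jm z (st y)) x - jm (jm x z) (st y).

Definition is_unital_JBstar_algebra (u : V) : Prop :=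
     (forall (a : R[i]) x y z, jm (a *: x + y) z = a *: jm x z + jm y z)
  /\ (forall x y, jm x y = jm y x)
  /\ (forall x y, jm (jm x y) (jm x x) = jm x (jm y (jm x x)))
  /\ (forall x y, `|jm x y| <= `|x| * `|y|)
  /\ (forall x, jm u x = x)
  /\ (forall x, st (st x) = x)
  /\ (forall (a : R[i]) x y, st (a *: x + y) = a^* *: st x + st y)
  /\ (forall x y, st (jm x y) = jm (st x) (st y))
  /\ (forall x, `|tp x x x| = `|x| ^+ 3).

Definition orthogonal (a b : V) : Prop := forall x, tp a b x = 0.

Definition triple_derivable_at_orthogonal_pairs (T : V -> V) : Prop :=
  forall a b c, orthogonal a b -> tp (T a) b c + tp a (T b) c + tp a b (T c) = 0.

Definition lin_map (T : V -> V) : Prop :=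
  forall (a : R[i]) x y, T (a *: x + y) = a *: T x + T y.

Definition bounded_linear (T : V -> V) : Prop :=
  lin_map T /\ exists M : R, forall x, `|T x| <= M%:C * `|x|.

Definition triple_derivation (d : V -> V) : Prop :=
  lin_map d /\
  forall a b c, d (tp a b c) = tp (d a) b c + tp a (d b) c + tp a b (d c).

Definition tripotent (e : V) : Prop := tp e e e = e.

(* Peirce-2 subspace A_2(e) and Peirce projection P_2(e) = Q(e)^2 *)
Definition A2 (e x : V) : Prop := tp e e x = x.
Definition P2 (e x : V) : V := tp e (tp e x e) e.

(* the JB*-algebra structure of A_2(e) *)
Definition jm_e (e : V) (x y : V) : V := tp x e y.
Definition st_e (e : V) (x : V) : V := tp e x e.
Definition tp_e (e x y z : V) : V :=
  jm_e e (jm_e e x (st_e e y)) z + jm_e e (jm_e e z (st_e e y)) x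
  - jm_e e (jm_e e x z) (st_e e y).

(* triple derivation of A_2(e): a map A_2(e) -> A_2(e) (values off A_2(e) irrelevant) *)
Definition triple_derivation_on_A2 (e : V) (d : V -> V) : Prop :=
  [/\ (forall x, A2 e x -> A2 e (d x)),
      (forall (a : R[i]) x y, A2 e x -> A2 e y -> d (a *: x + y) = a *: d x + d y)
    & (forall a b c, A2 e a -> A2 e b -> A2 e c ->
         d (tp_e e a b c) = tp_e e (d a) b c + tp_e e a (d b) c + tp_e e a b (d c))].

Definition in_centre (z : V) : Prop := forall c y, jm (jm z c) y = jm z (jm c y).
Definition in_centre_A2 (e z : V) : Prop :=
  A2 e z /\ forall c y, A2 e c -> A2 e y -> jm_e e (jm_e e z c) y = jm_e e z (jm_e e c y).

End JB.

(* Main.v *)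
Require Import Defs.
From mathcomp Require Import all_boot all_algebra.
From mathcomp Require Import all_classical all_reals all_analysis.
From mathcomp.real_closed Require Import complex.
Import GRing.Theory Num.Theory.
Import numFieldNormedType.Exports.
Local Open Scope ring_scope.
Local Open Scope complex_scope.

Module JRefl.
Inductive term := TV of nat | TA of term & term | TN of term | TM of term & term.
Inductive mon := MV of nat | MM of mon & mon.

Fixpoint mcmp (a b : mon) : comparison :=
  match a, b with
  | MV n, MV m => if (n < m)%N then Lt else if (m < n)%N then Gt else Eq
  | MV _, MM _ _ => Lt
  | MM _ _, MV _ => Gt
  | MM a1 a2, MM b1 b2 => match mcmp a1 b1 with Eq => mcmp a2 b2 | c => c end
  end.

Lemma mcmp_eq a b : mcmp a b = Eq -> a = b.
Proof.
elim: a b => [n|a1 IH1 a2 IH2] [m|b1 b2] //=.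
  by case: ltngtP => // ->.
case E: (mcmp a1 b1) => // /IH2 ->; by rewrite (IH1 _ E).
Qed.

Definition mmul a b := if mcmp a b is Gt then MM b a else MM a b.

Definition nf := seq (int * mon).

Fixpoint norm (t : term) : nf :=
  match t with
  | TV n => [:: (1%Z, MV n)]
  | TA a b => norm a ++ norm b
  | TN a => [seq (- p.1, p.2) | p <- norm a]
  | TM a b => [seq (p.1 * q.1, mmul p.2 q.2) | p <- norm a, q <- norm b]
  end.

Fixpoint ins (p : int * mon) (l : nf) : nf :=
  match l with
  | [::] => [:: p]
  | q :: l' => if mcmp p.2 q.2 is Eq then (p.1 + q.1, q.2) :: l' else q :: ins p l'
  end.

Definition collect (l : nf) := foldr ins [::] l.
Definition allz (l : nf) := all (fun p => p.1 == 0) l.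

Definition FT (a b c d : term) : term :=
  let part p q r := TA (TM (TM p d) (TM q r)) (TN (TM p (TM d (TM q r)))) in
  TA (part a b c) (TA (part b c a) (part c a b)).
Definition JT (x d : term) : term :=
  TA (TM (TM x d) (TM x x)) (TN (TM x (TM d (TM x x)))).

Inductive hyp := HJ of term & term | HF of term & term & term & term
  | HFm of term & term & term & term & term.

Definition hyp_term h := match h with
  | HJ x d => JT x d | HF a b c d => FT a b c d | HFm a b c d v => TM (FT a b c d) v end.

Definition check (k : int) (t : term) (hs : seq (int * hyp)) : bool :=
  allz (collect ([seq (k * p.1, p.2) | p <- norm t] ++
     flatten [seq [seq (- (p.1 * q.1), q.2) | q <- norm (hyp_term p.2)] | p <- hs])).

Section Refl.
Variable R : realType.
Variable V : lmodType R[i].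
Variable jm : V -> V -> V.
Hypothesis jmDZl : forall (a : R[i]) x y z, jm (a *: x + y) z = a *: jm x z + jm y z.
Hypothesis jmC : forall x y, jm x y = jm y x.
Hypothesis jordan : forall x y, jm (jm x y) (jm x x) = jm x (jm y (jm x x)).

Lemma jmDl x y z : jm (x + y) z = jm x z + jm y z.
Proof. by rewrite -[x]scale1r jmDZl !scale1r. Qed.
Lemma jm0l z : jm 0 z = 0.
Proof. by apply: (addrI (jm 0 z)); rewrite -jmDl !addr0. Qed.
Lemma jmZl a x z : jm (a *: x) z = a *: jm x z.
Proof. by have := jmDZl a x 0 z; rewrite !addr0 jm0l addr0. Qed.
Lemma jmNl x z : jm (- x) z = - jm x z.
Proof. by rewrite -scaleN1r jmZl scaleN1r. Qed.
Lemma jmzl x c z : jm (x *~ c) z = jm x z *~ c.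
Proof. by rewrite -[x *~ c]scaler_int jmZl scaler_int. Qed.
Lemma jm_suml (l : nf) (F : int * mon -> V) z :
  jm (\sum_(p <- l) F p) z = \sum_(p <- l) jm (F p) z.
Proof. elim: l => [|p l IH]; rewrite ?big_nil ?jm0l // !big_cons jmDl IH //. Qed.

Section Env.
Variable env : seq V.
Fixpoint interp (t : term) : V :=
  match t with
  | TV n => nth 0 env n
  | TA a b => interp a + interp b
  | TN a => - interp a
  | TM a b => jm (interp a) (interp b)
  end.
Fixpoint imon (m : mon) : V :=
  match m with MV n => nth 0 env n | MM a b => jm (imon a) (imon b) end.
Definition inf (l : nf) : V := \sum_(p <- l) imon p.2 *~ p.1.

Lemma imon_mmul a b : imon (mmul a b) = jm (imon a) (imon b).
Proof. by rewrite /mmul; case: (mcmp a b) => //=; rewrite jmC. Qed.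

Lemma inf_cat l1 l2 : inf (l1 ++ l2) = inf l1 + inf l2.
Proof. by rewrite /inf big_cat. Qed.

Lemma norm_sound t : inf (norm t) = interp t.
Proof.
elim: t => [n|a IHa b IHb|a IHa|a IHa b IHb] /=.
- by rewrite /inf big_seq1.
- by rewrite inf_cat IHa IHb.
- rewrite -IHa /inf big_map -sumrN; apply: eq_bigr => p _ /=; by rewrite mulrNz.
- rewrite -IHa -IHb /inf big_allpairs_dep jm_suml; apply: eq_bigr => p _.
  rewrite jmC jm_suml; apply: eq_bigr => q _ /=.
  by rewrite imon_mmul jmzl [jm (imon q.2) _]jmC jmzl -mulrzA.
Qed.

Lemma ins_sound p l : inf (ins p l) = imon p.2 *~ p.1 + inf l.
Proof.
elim: l => [|q l IH] /=; first by rewrite /inf big_seq1 big_nil addr0.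
case E: (mcmp p.2 q.2).
- rewrite /inf !big_cons /= mulrzDr addrA (mcmp_eq _ _ E) //.
- by rewrite /inf !big_cons -/(inf (ins p l)) IH addrCA.
- by rewrite /inf !big_cons -/(inf (ins p l)) IH addrCA.
Qed.

Lemma collect_sound l : inf (collect l) = inf l.
Proof.
elim: l => [|p l IH] /=; first by [].
by rewrite ins_sound IH /inf big_cons.
Qed.

Lemma allz_sound l : allz l -> inf l = 0.
Proof.
elim: l => [|p l IH] /=; first by rewrite /inf big_nil.
by case/andP => /eqP H0 /IH; rewrite /inf big_cons H0 mulr0z add0r.
Qed.

Fixpoint all_hz (hs : seq (int * hyp)) : Prop :=
  match hs with [::] => True | p :: hs' => interp (hyp_term p.2) = 0 /\ all_hz hs' end.

Lemma check_sound k t hs : k != 0 -> all_hz hs -> check k t hs -> interp t = 0.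
Proof.
move=> k0 Hh /allz_sound; rewrite collect_sound inf_cat.
have -> : inf [seq (k * p.1, p.2) | p <- norm t] = interp t *~ k.
  rewrite -norm_sound /inf big_map mulrz_suml; apply: eq_bigr => p _ /=.
  by rewrite mulrzA mulrzAC.
have -> : inf (flatten [seq [seq (- (p.1 * q.1), q.2) | q <- norm (hyp_term p.2)] | p <- hs]) = 0.
  elim: hs Hh => [|p hs IH] /=; first by rewrite /inf big_nil.
  case=> H1 H2.
  rewrite inf_cat IH // addr0.
  have -> : inf [seq (- (p.1 * q.1), q.2) | q <- norm (hyp_term p.2)] =
      - (interp (hyp_term p.2) *~ p.1).
    rewrite -norm_sound /inf big_map mulrz_suml -sumrN; apply: eq_bigr => q _ /=.
    by rewrite mulrNz mulrzA mulrzAC.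
  by rewrite H1 mul0rz oppr0.
rewrite addr0 => /eqP; rewrite -[interp t *~ k]scaler_int scaler_eq0 intr_eq0 (negPf k0) /= => /eqP //.
Qed.

Lemma JT_zero x d : interp (JT x d) = 0.
Proof. by rewrite /= jordan subrr. Qed.
End Env.


Lemma F_zero_v (a b c d : V) : interp [:: a; b; c; d] (FT (TV 0) (TV 1) (TV 2) (TV 3)) = 0.
Proof.
pose A := TV 0; pose B := TV 1; pose C := TV 2; pose D := TV 3.
apply: (@check_sound _ 2%Z _ [:: (1%Z, HJ (TA A (TA B C)) D); ((-1)%Z, HJ (TA A B) D);
  ((-1)%Z, HJ (TA A C) D); ((-1)%Z, HJ (TA B C) D); (1%Z, HJ A D); (1%Z, HJ B D); (1%Z, HJ C D)]).
- by [].
- by do !split; apply: JT_zero.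
- by vm_compute.
Qed.

Lemma hyp_zero env h : interp env (hyp_term h) = 0.
Proof.
case: h => [x d|a b c d|a b c d v].
- exact: JT_zero.
- exact: (F_zero_v (interp env a) (interp env b) (interp env c) (interp env d)).
- have H : interp env (FT a b c d) = 0.
    exact: (F_zero_v (interp env a) (interp env b) (interp env c) (interp env d)).
  change (jm (interp env (FT a b c d)) (interp env v) = 0); by rewrite H jm0l.
Qed.

Lemma all_hz_all env hs : all_hz env hs.
Proof. by elim: hs => [|p hs IH] //=; split=> //; apply: hyp_zero. Qed.


Definition Uj (a c b : V) := jm (jm a b) c + jm (jm c b) a - jm (jm a c) b.
Definition UT (a c b : term) := TA (TA (TM (TM a b) c) (TM (TM c b) a)) (TN (TM (TM a c) b)).

Lemma MacP1 (e f w : V) : Uj e (Uj e e w) f = Uj (Uj e e f) e w.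
Proof.
apply/eqP; rewrite -subr_eq0; apply/eqP.
pose E := TV 0; pose F := TV 1; pose W := TV 2.
apply: (@check_sound [:: e; f; w] 3%Z (TA (UT E (UT E E W) F) (TN (UT (UT E E F) E W)))
[:: ((3)%Z, HFm E E F W E);
   ((-6)%Z, HFm W F E E E);
   ((3)%Z, HFm W E E E F);
   ((-4)%Z, HFm E E E W F);
   ((-2)%Z, HFm E E E F W);
   ((-3)%Z, HF F E W (TM E E));
   ((9)%Z, HF W F (TM E E) E);
   ((-3)%Z, HF E (TM E E) F W);
   ((3)%Z, HF E (TM W F) E E);
   ((-6)%Z, HF W E (TM E F) E);
   ((6)%Z, HF E (TM E F) E W);
   ((-3)%Z, HF E W E (TM E F))]).
- by [].
- exact: all_hz_all.
- by vm_compute.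
Qed.

Lemma MacP2 (e f w : V) : Uj e e (Uj f w e) = Uj (Uj e e f) e w.
Proof.
apply/eqP; rewrite -subr_eq0; apply/eqP.
pose E := TV 0; pose F := TV 1; pose W := TV 2.
apply: (@check_sound [:: e; f; w] 3%Z (TA (UT E E (UT F W E)) (TN (UT (UT E E F) E W)))
[:: ((-3)%Z, HFm E E F W E);
   ((-2)%Z, HFm E E E W F);
   ((-3)%Z, HFm E E W F E);
   ((-3)%Z, HFm E F E E W);
   ((-1)%Z, HFm E E E F W);
   ((-6)%Z, HF F E W (TM E E));
   ((6)%Z, HF W F (TM E E) E);
   ((3)%Z, HF (TM E E) W E F);
   ((3)%Z, HF E (TM W F) E E);
   ((3)%Z, HF E (TM E F) E W);
   ((-6)%Z, HF E W E (TM E F))]).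
- by [].
- exact: all_hz_all.
- by vm_compute.
Qed.
End Refl.

End JRefl.
Import JRefl.

Lemma ab_rearr (R : realType) (V : lmodType R[i]) (x1 x2 y1 y2 z1 z2 : V) :
  (x1 + x2) + (y1 + y2) - (z1 + z2) = (x1 + y1 - z1) + (x2 + y2 - z2).
Proof.
apply/eqP; rewrite -subr_eq0; apply/eqP.
pose jm0 := fun _ _ : V => (0 : V).
apply: (@check_sound R V jm0 _ _ [:: x1; x2; y1; y2; z1; z2] 1%Z
  (TA (TA (TA (TA (TV 0) (TV 1)) (TA (TV 2) (TV 3))) (TN (TA (TV 4) (TV 5))))
    (TN (TA (TA (TA (TV 0) (TV 2)) (TN (TV 4))) (TA (TA (TV 1) (TV 3)) (TN (TV 5)))))) [::]).
- by move=> a x y z; rewrite /jm0 scaler0 addr0.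
- by [].
- by [].
- by [].
- by vm_compute.
Qed.

Theorem mainTheorem12 (R : realType) (V : completeNormedModType R[i])
  (jm : V -> V -> V) (st : V -> V) (u : V)
  (HA : is_unital_JBstar_algebra jm st u)
  (T : V -> V) (HTb : bounded_linear T)
  (HTo : triple_derivable_at_orthogonal_pairs jm st T)
  (e : V) (He : tripotent jm st e)
  (delta : V -> V) (xi : V)
  (Hdelta : triple_derivation jm st delta)
  (Hxi_c : in_centre jm xi) (Hxi_s : st xi = xi)
  (HT : forall a, T a = delta a + jm xi a)
  (delta_e : V -> V) (xi_e : V)
  (Hdelta_e : triple_derivation_on_A2 jm st e delta_e)
  (Hxie_c : in_centre_A2 jm st e xi_e) (Hxie_s : st_e jm st e xi_e = xi_e)
  (HTe : forall a, A2 jm st e a -> P2 jm st e (T a) = delta_e a + jm_e jm st e xi_e a) :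
  jm xi e = xi_e.
Proof.
case: HA => jmDZl [jmC [jordan [_ [_ [stK [stDZ [stM _]]]]]]].
have jmDl' := @jmDl R V jm jmDZl; have jmNl' := @jmNl R V jm jmDZl.
have jmDr x y z : jm x (y + z) = jm x y + jm x z.
  by rewrite jmC jmDl' ![jm _ x]jmC.
have jmNr x y : jm x (- y) = - jm x y by rewrite jmC jmNl' jmC.
have stD x y : st (x + y) = st x + st y.
  by rewrite -[x]scale1r stDZ rmorph1 !scale1r.
have st0 : st 0 = 0.
  by apply: (addrI (st 0)); rewrite -stD !addr0.
have stN x : st (- x) = - st x.
  by apply: (addrI (st x)); rewrite -stD !subrr st0.
set tp := tp jm st.
have He' : tp e e e = e := He.
have tpU a b c : tp a b c = Uj R V jm a c (st b) by reflexivity.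
have Hdel a b c : delta (tp a b c) = tp (delta a) b c + tp a (delta b) c + tp a b (delta c).
  exact: Hdelta.2.
case: Hdelta_e => Hd1 _ Hd3.
have Hx0A2 : tp e e (delta_e e) = delta_e e := Hd1 e He.
have H3 := Hd3 e e e He He He.
rewrite /tp_e /jm_e /st_e -/tp in H3.
have HTe' := HTe e He.
rewrite /P2 /jm_e -/tp in HTe'.
have Hxie1 : tp e e xi_e = xi_e := Hxie_c.1.
have Hs : tp e xi_e e = xi_e := Hxie_s.
clearbody tp.
clear Hd1 Hd3 HTe Hxie_c Hxie_s Hdelta He.
have stU a c b : st (Uj R V jm a c b) = Uj R V jm (st a) (st c) (st b).
  by rewrite /Uj !stD !stN !stM.
have tp_sym a b c : tp a b c = tp c b a.
  by rewrite !tpU /Uj (jmC c a) [jm (jm c _) a + _]addrC.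
have UD a c b1 b2 : Uj R V jm a c (b1 + b2) = Uj R V jm a c b1 + Uj R V jm a c b2.
  by rewrite /Uj !jmDr !jmDl' ab_rearr.
have UN a c b : Uj R V jm a c (- b) = - Uj R V jm a c b.
  by rewrite /Uj !jmNr !jmNl' !opprD.
have QD a b1 b2 : tp a (b1 + b2) a = tp a b1 a + tp a b2 a.
  by rewrite !tpU stD UD.
have QN a b : tp a (- b) a = - tp a b a.
  by rewrite !tpU stN UN.
have LQ y : tp e e (tp e y e) = tp e y e.
  rewrite [LHS]tpU tpU (@MacP1 R V jm jmDZl jmC jordan).
  by rewrite -[Uj R V jm e e (st e)]tpU He'.
have QL y : tp e (tp e e y) e = tp e y e.
  rewrite [LHS]tpU tpU stU stK (@MacP2 R V jm jmDZl jmC jordan).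
  by rewrite -[Uj R V jm e e (st e)]tpU He'.
have aux (a x : V) : a = a + x + a -> x = - a.
  move=> H; apply: (addIr a); rewrite addNr; apply: (addrI a).
  by rewrite addr0 addrA -H.
have cA a b : jm a (jm xi b) = jm xi (jm a b).
  by rewrite jmC Hxi_c (jmC b a).
have Uxi a c b : Uj R V jm a c (jm xi b) = jm xi (Uj R V jm a c b).
  by rewrite /Uj !cA !Hxi_c !jmDr !jmNr.
have Qxe : tp e (jm xi e) e = jm xi e.
  by rewrite tpU stM Hxi_s Uxi -[Uj R V jm e e (st e)]tpU He'.
have Hy0 : delta e = tp e e (delta e) + tp e (delta e) e + tp e e (delta e).
  have H := Hdel e e e.
  by rewrite He' (tp_sym (delta e)) in H.
have HP : tp e (tp e (tp e (delta e) e) e) e = - tp e (tp e (delta e) e) e.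
  apply: aux.
  have H : tp e (tp e (delta e) e) e =
    tp e (tp e (tp e e (delta e) + tp e (delta e) e + tp e e (delta e)) e) e by rewrite -Hy0.
  by rewrite !QD !QL in H.
have Hx0 : tp e (delta_e e) e = - delta_e e.
  apply: aux.
  move: H3; rewrite !He' [e + e - e]addrK !(tp_sym _ e e) !Hx0A2 !LQ !addrK.
  exact: id.
rewrite HT !QD !Qxe (tp_sym xi_e) Hxie1 in HTe'.
have QZ : tp e (jm xi e - xi_e) e = jm xi e - xi_e.
  by rewrite QD QN Qxe Hs.
have QZ' : tp e (jm xi e - xi_e) e = - (jm xi e - xi_e).
  have -> : jm xi e - xi_e = delta_e e - tp e (tp e (delta e) e) e.
    by rewrite -(addKr (tp e (tp e (delta e) e) e) (jm xi e)) HTe' addrA addrK addrC.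
  by rewrite QD QN Hx0 HP opprD opprK.
apply/eqP; rewrite -subr_eq0; apply/eqP.
have H2 : (jm xi e - xi_e) *+ 2 = 0.
  by rewrite mulr2n -{1}QZ QZ' addNr.
move: H2; rewrite -scaler_nat => /eqP; rewrite scaler_eq0 pnatr_eq0 /= => /eqP //.
Qed.
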